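(* Let $t\ge2$, $n\ge1$ and let $\lambda$ be a partition of length at most $tn+1$. Then the $t$-core of $\lambda$ is $(1,0,0)$-asymmetric if and only if $n_0(\lambda,tn+1)=n+1$ and $n_i(\lambda,tn+1)+n_{t-i}(\lambda,tn+1)=2n$ for all $1\le i\le t-1$.
   Context: For a partition $\lambda$ of length at most $\ell$, $\beta_i(\lambda,\ell)=\lambda_i+\ell-i$ ($1\le i\le\ell$) and $n_i(\lambda,\ell)$ is the number of $\beta_j(\lambda,\ell)$ congruent to $i$ mod $t$. The $t$-core is the usual one (remove all rim hooks of length $t$). A partition $\mu$ of Frobenius rank $r$ (largest $j$ with $\mu_j\ge j$) is $(1,0,0)$-asymmetric if its Frobenius coordinates $(\alpha\mid\beta)$, $\alpha_i=\mu_i-i$, $\beta_i=\mu'_i-i$ ($1\le i\le r$, $\mu'$ the conjugate), satisfy $\beta_i=\alpha_i+1$ for all $i$; the empty partition is $(1,0,0)$-asymmetric. *)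

(* Defs.v *)
(* Partitions are finite sequences of natural numbers;
   rows and columns of Young diagrams are 0-indexed internally. *)
From mathcomp Require Import all_boot.
Set Implicit Arguments. Unset Strict Implicit. Unset Printing Implicit Defensive.

Definition is_partition (l : seq nat) : bool :=
  sorted geq l && all (fun x => 0 < x) l.

(* the i-th part, 1-indexed (0 beyond the length) *)
Definition part (l : seq nat) (i : nat) : nat := nth 0 l i.-1.

(* cells of the Young diagram: (row, column), 0-indexed *)
Definition in_diag (l : seq nat) (c : nat * nat) : bool := c.2 < nth 0 l c.1.

Definition contained (m l : seq nat) : Prop := forall i, nth 0 m i <= nth 0 l i.

Definition in_skew (l m : seq nat) (c : nat * nat) : bool :=
  in_diag l c && ~~ in_diag m c.

Definition adjacent (c d : nat * nat) : bool :=
  ((c.1 == d.1) && ((c.2 == d.2.+1) || (d.2 == c.2.+1))) ||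
  ((c.2 == d.2) && ((c.1 == d.1.+1) || (d.1 == c.1.+1))).

Definition skew_connected (l m : seq nat) : Prop :=
  forall a b, in_skew l m a -> in_skew l m b ->
    exists p : seq (nat * nat),
      [/\ path adjacent a p, last a p = b & all (in_skew l m) p].

Definition skew_no_2x2 (l m : seq nat) : Prop :=
  forall i j, ~ [&& in_skew l m (i, j), in_skew l m (i.+1, j),
                   in_skew l m (i, j.+1) & in_skew l m (i.+1, j.+1)].

Definition remove_rim_hook (t : nat) (l m : seq nat) : Prop :=
  [/\ is_partition m, contained m l, sumn l = sumn m + t,
      skew_connected l m & skew_no_2x2 l m].

Inductive rim_hook_reach (t : nat) : seq nat -> seq nat -> Prop :=
| rhr_refl l : rim_hook_reach t l l
| rhr_step l m k : remove_rim_hook t l m -> rim_hook_reach t m k ->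
                   rim_hook_reach t l k.

Definition is_tcore (t : nat) (l k : seq nat) : Prop :=
  rim_hook_reach t l k /\ forall m, ~ remove_rim_hook t k m.

Definition beta (l : seq nat) (ell i : nat) : nat := part l i + ell - i.

Definition nres (t : nat) (l : seq nat) (ell k : nat) : nat :=
  count (fun j => beta l ell j %% t == k %% t) (iota 1 ell).

Definition conj_part (l : seq nat) (i : nat) : nat := count (fun x => i <= x) l.

Definition frob_rank (l : seq nat) : nat :=
  \max_(j < (size l).+1 | j <= part l j) j.

Definition frob_alpha (l : seq nat) (i : nat) : nat := part l i - i.
Definition frob_beta (l : seq nat) (i : nat) : nat := conj_part l i - i.

Definition asym100 (l : seq nat) : Prop :=
  forall i, 1 <= i <= frob_rank l -> frob_beta l i = (frob_alpha l i).+1.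

(* Main.v *)
Require Import Defs.
From mathcomp Require Import all_boot.
From mathcomp Require Import zify.
From Stdlib Require Import Classical_Prop.
Set Implicit Arguments. Unset Strict Implicit. Unset Printing Implicit Defensive.

Lemma part_mono l i j : is_partition l -> i <= j -> nth 0 l j <= nth 0 l i.
Proof.
move=> /andP[srt _] hij.
case: (ltnP j (size l)) => hj; last by rewrite nth_default.
have tr : transitive geq by move=> a b c h1 h2; apply: leq_trans h2 h1.
apply: (sorted_leq_nth tr leqnn 0 srt) => //; rewrite inE; lia.
Qed.

Lemma part_pos l j : is_partition l -> j < size l -> 0 < nth 0 l j.
Proof. by move=> /andP[_ /(all_nthP 0) H] /H. Qed.

Lemma CJ l i p : sorted geq l -> 1 <= i -> (p < conj_part l i) = (i <= nth 0 l p).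
Proof.
rewrite /conj_part.
elim: l p => [|x l IH] p srt hi /=; first by rewrite nth_nil; lia.
have srt' : sorted geq l by apply: path_sorted srt.
have tr : transitive geq by move=> a b c h1 h2; apply: leq_trans h2 h1.
have allx : all (geq x) l by move: srt => /=; apply: order_path_min.
case: (leqP i x) => hix /=.
  case: p => [|p] //=; rewrite add1n ltnS; exact: IH.
have -> : count (fun x0 => i <= x0) l = 0.
  apply/eqP; rewrite -leqn0 leqNgt -has_count; apply/hasPn => y /(allP allx) /= hy.
  lia.
rewrite add0n ltn0; case: p => [|p] /=; first lia.
case: (ltnP p (size l)) => hp; last by rewrite nth_default //; lia.
have := allP allx _ (mem_nth 0 hp) => /= ?; lia.
Qed.

Lemma FR l i : is_partition l -> 1 <= i -> (i <= frob_rank l) = (i <= part l i).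
Proof.
move=> pl hi; apply/idP/idP => h.
  apply: contraLR h; rewrite -!ltnNge => h.
  suff : frob_rank l <= i.-1 by lia.
  rewrite /frob_rank; apply/bigmax_leqP => j hj.
  case: (leqP i j) => hij; last lia.
  have : part l j <= part l i by rewrite /part; apply: part_mono => //; lia.
  lia.
case: (leqP i (size l)) => hs.
  have hi' : i < (size l).+1 by lia.
  rewrite /frob_rank; have := @leq_bigmax_cond _ (fun j : 'I_(size l).+1 => j <= part l j) (fun j => nat_of_ord j) (Ordinal hi').
  move=> H; exact: H h.
move: h; rewrite /part nth_default; lia.
Qed.

Definition Qp (l : seq nat) := forall i j, 1 <= i <= j -> (j <= part l i) = (i <= nth 0 l j).

Lemma asym_Q l : is_partition l -> asym100 l <-> Qp l.
Proof.
move=> pl; have srt : sorted geq l by case/andP: pl.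
split.
  move=> A i j /andP[hi hij].
  case: (leqP i (part l i)) => hL.
    have hr : 1 <= i <= frob_rank l by rewrite hi FR.
    have := A i hr; rewrite /frob_beta /frob_alpha => e.
    have ec : conj_part l i = (part l i).+1 by lia.
    by rewrite -CJ // ec ltnS.
  have : nth 0 l j <= part l i by rewrite /part; apply: part_mono => //; lia.
  move=> ?; apply/idP/idP; lia.
move=> Q i /andP[hi hir].
have hL : i <= part l i by rewrite -FR.
rewrite /frob_beta /frob_alpha.
suff ec : conj_part l i = (part l i).+1 by lia.
have key : forall p, (p < conj_part l i) = (p < (part l i).+1).
  move=> p; rewrite CJ //.
  case: (ltnP p i) => hp.
    have : part l i <= nth 0 l p by rewrite /part; apply: part_mono => //; lia.
    move=> ?; apply/idP/idP; lia.
  by rewrite ltnS Q // hi hp.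
apply/eqP; rewrite eqn_leq; apply/andP; split.
  by rewrite leqNgt key ltnn.
by rewrite key ltnSn.
Qed.

Definition Nc k L v := count (fun j => v <= beta k L j) (iota 1 L).
Definition bc k L x := count (fun j => beta k L j == x) (iota 1 L).

Lemma beta_mono k L i j : is_partition k -> 1 <= i -> i <= j -> j <= L ->
  beta k L j + (j - i) <= beta k L i.
Proof.
move=> pk hi hij hjL; rewrite /beta.
have : part k j <= part k i by rewrite /part; apply: part_mono => //; lia.
lia.
Qed.

Lemma count_all_iota (a : pred nat) m n :
  (forall j, m <= j < m + n -> a j) -> count a (iota m n) = n.
Proof.
move=> H; rewrite -[n in RHS](size_iota m n) -count_predT.
by apply: eq_in_count => j; rewrite mem_iota => /H ->.
Qed.

Lemma count_none_iota (a : pred nat) m n :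
  (forall j, m <= j < m + n -> ~~ a j) -> count a (iota m n) = 0.
Proof.
move=> H; rewrite -(count_pred0 (iota m n)).
by apply: eq_in_count => j; rewrite mem_iota => /H /negbTE ->.
Qed.

Lemma count_le_size (T : Type) (a : pred T) s : count a s <= size s.
Proof. by rewrite -count_predT; apply: sub_count. Qed.

Lemma NB k L v i : is_partition k -> 1 <= i <= L ->
  (i <= Nc k L v) = (v <= beta k L i).
Proof.
move=> pk /andP[hi hiL]; rewrite /Nc.
case: (leqP v (beta k L i)) => hv.
  rewrite (_ : iota 1 L = iota 1 i ++ iota (1 + i) (L - i)); last by rewrite -iotaD; congr iota; lia.
  rewrite count_cat count_all_iota; first lia.
  move=> j hj; have h1 : 1 <= j by lia. have h2 : j <= i by lia.
  have := beta_mono (L:=L) pk h1 h2; lia.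
rewrite (_ : iota 1 L = iota 1 (i - 1) ++ iota (1 + (i - 1)) (L - i + 1)); last by rewrite -iotaD; congr iota; lia.
rewrite count_cat (count_none_iota (n := L - i + 1)).
  have := count_le_size (fun j => v <= beta k L j) (iota 1 (i - 1)).
  rewrite size_iota; lia.
move=> j hj; have h2 : i <= j by lia. have h3 : j <= L by lia.
have := beta_mono pk hi h2 h3; move=> ?; apply/negP; lia.
Qed.

Lemma N_le k L v : Nc k L v <= L.
Proof. by have := count_le_size (fun j => v <= beta k L j) (iota 1 L); rewrite size_iota. Qed.

Lemma cellN k L i j : is_partition k -> size k <= L -> 1 <= i -> 1 <= j ->
  (j <= part k i) = (i <= Nc k L (L + j - i)).
Proof.
move=> pk hs hi hj.
case: (leqP i L) => hiL.
  rewrite NB //; last by rewrite hi hiL.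
  rewrite /beta; apply/idP/idP; lia.
have -> : part k i = 0 by rewrite /part nth_default //; case: i hi hiL => //= i _ hiL; lia.
move: (N_le k L (L + j - i)) => ?; apply/idP/idP; lia.
Qed.

Definition Qp' k L := forall u, Nc k L (L + u) = Nc k L (L - 1 - u) - u.+1.

Lemma natfun_eq A E c : (forall i, 1 <= i -> (i <= A) = (i + c <= E)) -> A = E - c.
Proof.
move=> H.
case: (ltnP 0 A) => hA.
  have h1 := H A hA; rewrite leqnn in h1.
  case: (ltnP 0 (E - c)) => hE; last lia.
  have h2 := H _ hE. 
  have e : E - c + c <= E by lia.
  rewrite e in h2; lia.
case: (ltnP 0 (E - c)) => hE; last lia.
have h2 := H _ hE; have e : E - c + c <= E by lia.
rewrite e in h2; lia.
Qed.

Lemma Q_Q' k L : is_partition k -> size k <= L -> Qp k <-> Qp' k L.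
Proof.
move=> pk hs.
have key : forall i j, 1 <= i <= j ->
   (j <= part k i) = (i <= Nc k L (L + (j - i))) /\
   (i <= nth 0 k j) = (i + (j - i) + 1 <= Nc k L (L - 1 - (j - i))).
  move=> i j /andP[hi hij]; split.
    by rewrite (cellN (L:=L)) //; [congr (_ <= Nc _ _ _); lia | lia].
  have -> : nth 0 k j = part k j.+1 by [].
  rewrite (cellN (L:=L)) //.
  have -> : i + (j - i) + 1 = j.+1 by lia.
  congr (_ <= Nc _ _ _); lia.
split.
  move=> Q u; apply: natfun_eq => i hi.
  have hij : 1 <= i <= i + u by lia.
  have [h1 h2] := key _ _ hij.
  have e : i + u - i = u by lia.
  rewrite e in h1 h2; rewrite -h1 (_ : i + u.+1 = i + u + 1); last lia. rewrite -h2; exact: Q.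
move=> Q' i j hij.
have [-> ->] := key _ _ hij.
rewrite Q'; apply/idP/idP; lia.
Qed.

Lemma count_split (T : Type) (f : T -> nat) v s :
  count (fun j => v <= f j) s = count (fun j => f j == v) s + count (fun j => v < f j) s.
Proof.
elim: s => //= x s ->.
case: (ltngtP v (f x)) => h /=. all: try lia.
Qed.

Lemma N_step k L v : Nc k L v = bc k L v + Nc k L v.+1.
Proof. exact: count_split. Qed.

Lemma N_anti k L v w : v <= w -> Nc k L w <= Nc k L v.
Proof. move=> h; apply: sub_count => j /= hj; lia. Qed.

Lemma bc_le_N k L v : bc k L v <= Nc k L v.
Proof. apply: sub_count => j /= /eqP ->; lia. Qed.

Lemma N0 k L : Nc k L 0 = L.
Proof. by rewrite /Nc (count_all_iota (n:=L)). Qed.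

Lemma N_lower k L v : is_partition k -> v < L -> L - v <= Nc k L v.
Proof.
move=> pk h; rewrite NB //; last lia.
rewrite /beta; lia.
Qed.

Lemma N_zero k L v : is_partition k -> 1 <= L -> (forall x, v <= x -> bc k L x = 0) -> Nc k L v = 0.
Proof.
move=> pk hL H; apply/eqP; rewrite -leqn0 leqNgt; apply/negP => hN.
have : v <= beta k L 1 by rewrite -NB // hL.
move/H; rewrite /bc (_ : iota 1 L = 1 :: iota 2 (L - 1)); last by rewrite -[in LHS](subnK hL) addn1.
by rewrite /= eqxx.
Qed.

Definition Sc k L := [/\ bc k L (L - 1) = 1,
  (forall u, 1 <= u <= L - 1 -> bc k L (L - 1 - u) + bc k L (L - 1 + u) = 1) &
  (forall x, 2 * L - 1 <= x -> bc k L x = 0)].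

Lemma Q'_S k L : is_partition k -> 1 <= L -> Qp' k L <-> Sc k L.
Proof.
move=> pk hL; split.
  move=> Q'.
  have H1 : forall u, u <= L - 1 -> Nc k L (L - 1 - u) = Nc k L (L + u) + u.+1.
    move=> u hu; rewrite Q'; have := N_lower pk (_ : L - 1 - u < L).
    have e : L - (L - 1 - u) = u.+1 by lia.
    move=> h; have := h ltac:(lia); rewrite e; lia.
  split.
  - have := H1 0 (leq0n _); rewrite N_step subn0 addn0.
    have -> : (L - 1).+1 = L by lia.
    lia.
  - move=> u hu.
    have a1 := H1 u ltac:(lia); have a2 := H1 (u - 1) ltac:(lia).
    have e1 := N_step k L (L - 1 - u); have e2 := N_step k L (L - 1 + u).
    rewrite (_ : (L - 1 - u).+1 = L - 1 - (u - 1)) in e1; last lia.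
    rewrite (_ : (L - 1 + u).+1 = L + u) in e2; last lia.
    rewrite (_ : L + (u - 1) = L - 1 + u) in a2; last lia.
    lia.
  - move=> x hx.
    have h := Q' (L - 1); rewrite (_ : L - 1 - (L - 1) = 0) in h; last lia. rewrite N0 in h.
    have := bc_le_N k L x; have := N_anti k L (_ : L + (L - 1) <= x).
    move=> h2; have := h2 ltac:(lia); lia.
case=> S1 S2 S3.
have H1 : forall u, u <= L - 1 -> Nc k L (L - 1 - u) = Nc k L (L + u) + u.+1.
  elim=> [|u IH] hu.
    rewrite subn0 addn0 N_step S1; have -> : (L - 1).+1 = L by lia.
    lia.
  have a1 := S2 u.+1 ltac:(lia); have a2 := IH ltac:(lia).
  have e1 := N_step k L (L - 1 - u.+1); have e2 := N_step k L (L + u).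
  rewrite (_ : (L - 1 - u.+1).+1 = L - 1 - u) in e1; last lia.
  rewrite (_ : L - 1 + u.+1 = L + u) in a1; last lia.
  rewrite (_ : (L + u).+1 = L + u.+1) in e2; last lia.
  lia.
move=> u.
case: (leqP u (L - 1)) => hu.
  rewrite H1 //; lia.
rewrite (N_zero pk hL); last by move=> x hx; apply: S3; lia.
rewrite (_ : L - 1 - u = 0); last lia.
rewrite N0; lia.
Qed.

Lemma bc_le1 k L x : is_partition k -> bc k L x <= 1.
Proof.
move=> pk; rewrite /bc.
have -> : count (fun j => beta k L j == x) (iota 1 L) = count (pred1 x) (map (beta k L) (iota 1 L)).
  by rewrite count_map.
rewrite count_uniq_mem; first by case: (_ \in _).
rewrite map_inj_in_uniq ?iota_uniq // => i j; rewrite !mem_iota => hi hj e.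
case: (ltngtP i j) => // h.
  have := beta_mono (L:=L) pk (_ : 1 <= i) (ltnW h) (_ : j <= L); lia.
have := beta_mono (L:=L) pk (_ : 1 <= j) (ltnW h) (_ : i <= L); lia.
Qed.

Lemma SQ b r t M : r < t -> \sum_(q < M) (b == r + q * t) = ((b %% t == r) && (b %/ t < M)).
Proof.
move=> hr; have t0 : 0 < t by lia.
elim: M => [|M IH]; first by rewrite big_ord0 ltn0 andbF.
rewrite big_ord_recr /= IH.
have -> : (b == r + M * t) = (b %% t == r) && (b %/ t == M).
  apply/eqP/andP.
    move=> ->; rewrite addnC modnMDl divnMDl // modn_small // divn_small // addn0; by split.
  case=> /eqP h1 /eqP h2; rewrite {1}(divn_eq b t) h1 h2 addnC //.
case: (b %% t == r) => //=.
case: (ltngtP (b %/ t) M) => h /=; lia.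
Qed.

Lemma sum_count_runner (f : nat -> nat) r t M s : r < t -> (forall j, j \in s -> f j < M) ->
  \sum_(q < M) count (fun j => f j == r + q * t) s = count (fun j => f j %% t == r) s.
Proof.
move=> hr; elim: s => [|x s IH] H /=.
  by rewrite big1.
rewrite big_split /= SQ // IH; last by move=> j hj; apply: H; rewrite inE hj orbT.
have hx := H x (mem_head _ _).
have : f x %/ t < M by apply: leq_ltn_trans (leq_div _ _) hx.
by move=> ->; rewrite andbT.
Qed.

Lemma sum_ind M z : \sum_(i < M) (i < z) = minn M z.
Proof.
elim: M => [|M IH]; first by rewrite big_ord0 min0n.
rewrite big_ord_recr /= IH; case: (ltnP M z) => h /=; lia.
Qed.

Lemma antitone (f : nat -> nat) : (forall q, f q.+1 <= f q) -> forall i j, i <= j -> f j <= f i.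
Proof.
move=> H i j hij; rewrite -(subnK hij); elim: (j - i) => [|d IH] //=.
by apply: leq_trans (H _) IH.
Qed.

Lemma run01 (f : nat -> nat) M : (forall q, f q <= 1) -> (forall q, f q.+1 <= f q) -> f M = 0 ->
  forall q, f q = (q < \sum_(i < M) f i).
Proof.
move=> H1 H2 HM.
have ex : exists z, f z == 0 by exists M; rewrite HM.
case: (ex_minnP ex) => z /eqP fz zmin.
have pw : forall i, f i = (i < z).
  move=> i; case: (ltnP i z) => h.
    have := H1 i; case e: (f i) => [|[|]] //= _.
    by have := zmin i; rewrite e eqxx => /(_ isT); lia.
  by have := antitone H2 h; rewrite fz; lia.
have zM : z <= M by apply: zmin; rewrite HM.
move=> q; rewrite pw (eq_bigr (fun i : 'I_M => nat_of_bool (i < z))); last by move=> i _; rewrite pw.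
by rewrite sum_ind; have -> : minn M z = z by lia.
Qed.

Definition tclosed t k L := forall x, 0 < bc k L x -> t <= x -> 0 < bc k L (x - t).

Lemma beta_bound k L j : is_partition k -> beta k L j <= L + nth 0 k 0.
Proof.
move=> pk; rewrite /beta /part.
have := part_mono (i := 0) (j := j.-1) pk (leq0n _); lia.
Qed.

Lemma bc_big k L x : is_partition k -> L + nth 0 k 0 < x -> bc k L x = 0.
Proof.
move=> pk h; apply: count_none_iota => j _; have := beta_bound L j pk.
move=> ?; apply/negP => /eqP; lia.
Qed.

Lemma runner k L t r q : is_partition k -> r < t -> tclosed t k L ->
  bc k L (r + q * t) = (q < nres t k L r).
Proof.
move=> pk hr cl; have t0 : 0 < t by lia.
set M := L + nth 0 k 0 + 1.
have -> : nres t k L r = \sum_(q < M) bc k L (r + q * t).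
  rewrite /nres (modn_small hr) /bc sum_count_runner //.
  move=> j _; have := beta_bound L j pk; rewrite /M; lia.
apply: (run01 (f := fun q => bc k L (r + q * t))).
- by move=> i; apply: bc_le1.
- move=> i; have := bc_le1 L (r + i.+1 * t) pk; have := bc_le1 L (r + i * t) pk.
  case: (ltnP 0 (bc k L (r + i.+1 * t))) => h; last lia.
  have := cl _ h; rewrite (_ : r + i.+1 * t - t = r + i * t); last by rewrite mulSn; lia.
  move=> h2; have := h2 ltac:(rewrite mulSn; lia); lia.
- apply: bc_big => //; rewrite /M; nia.
Qed.

Lemma S_counts k t n : is_partition k -> 2 <= t -> 1 <= n -> tclosed t k (t * n + 1) ->
  Sc k (t * n + 1) <->
  (nres t k (t * n + 1) 0 = n + 1 /\
   forall i, 1 <= i <= t - 1 -> nres t k (t * n + 1) i + nres t k (t * n + 1) (t - i) = 2 * n).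
Proof.
move=> pk ht hn cl; have t0 : 0 < t by lia.
remember (t * n + 1) as L eqn:EL.
have R : forall r q, r < t -> bc k L (r + q * t) = (q < nres t k L r).
  by move=> r q hr; rewrite EL; apply: runner => //; rewrite -EL.
have eL : L - 1 = 0 + n * t by rewrite EL; lia.
split.
  case=> S1 S2 S3.
  have pair : forall x y, x + y = 2 * (L - 1) -> x != L - 1 -> bc k L x + bc k L y = 1.
    move=> x y hxy hx.
    case: (ltngtP x (L - 1)) => h; last by rewrite h eqxx in hx.
      have := S2 (L - 1 - x) ltac:(lia).
      have e1 : L - 1 - (L - 1 - x) = x by lia.
      have e2 : L - 1 + (L - 1 - x) = y by lia.
      by rewrite e1 e2.
    have := S2 (x - (L - 1)) ltac:(lia).
    have e1 : L - 1 - (x - (L - 1)) = y by lia.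
    have e2 : L - 1 + (x - (L - 1)) = x by lia.
    by rewrite e1 e2 addnC.
  have c0 : nres t k L 0 = n + 1.
    have h1 := S1; rewrite eL R // in h1.
    have ht1 : t <= n * t by rewrite leq_pmull.
    have h2 := S2 t ltac:(lia).
    have e1 : (n - 1) * t = n * t - t by rewrite mulnBl mul1n.
    have e2 : (n + 1) * t = n * t + t by rewrite mulnDl mul1n.
    rewrite (_ : L - 1 - t = 0 + (n - 1) * t) in h2; last lia.
    rewrite (_ : L - 1 + t = 0 + (n + 1) * t) in h2; last lia.
    rewrite !R // in h2; lia.
  split => // i /andP[hi1 hit].
  have bnd : forall r, 1 <= r < t -> nres t k L r <= 2 * n.
    move=> r /andP[hr1 hr]; have e : (2 * n) * t = 2 * (n * t) by rewrite mulnA.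
    have := S3 (r + (2 * n) * t) ltac:(lia).
    rewrite R //; case: (ltnP (2 * n) (nres t k L r)) => //.
  set cr := nres t k L i; set cr' := nres t k L (t - i).
  have b1 : cr <= 2 * n by apply: bnd; lia.
  have b2 : cr' <= 2 * n by apply: bnd; lia.
  have P : forall q, q <= 2 * n - 1 -> bc k L (i + q * t) + bc k L ((t - i) + (2 * n - 1 - q) * t) = 1.
    move=> q hq; apply: pair.
      have e : (2 * n - 1 - q) * t = (2 * n) * t - t - q * t by rewrite !mulnBl mul1n.
      have e2 : (2 * n) * t = 2 * (n * t) by rewrite mulnA.
      have : q * t + t <= (2 * n) * t by rewrite -mulSnr leq_mul2r; lia.
      lia.
    apply/negP => /eqP e.
    have : (i + q * t) %% t = (0 + n * t) %% t by rewrite e eL.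
    have m1 : (i + q * t) %% t = i by rewrite addnC modnMDl modn_small //; lia.
    by rewrite m1 add0n modnMl; lia.
  case: (ltngtP (cr + cr') (2 * n)) => h //.
    have := P cr ltac:(lia); rewrite !R; lia.
  have := P (cr - 1) ltac:(lia); rewrite !R; lia.
case=> c0 cp.
have nt : L - 1 = n * t by lia.
split.
- by rewrite eL R // c0; lia.
- move=> u /andP[hu1 hu2].
  have [v [s [ed hs]]] : exists v s, u = v * t + s /\ s < t.
    by exists (u %/ t), (u %% t); rewrite -divn_eq ltn_mod t0.
  subst u.
  rewrite nt in hu2 *.
  case: (posnP s) => hs0.
    subst s; rewrite addn0 in hu1 hu2 *.
    have hv1 : 1 <= v by case: (posnP v) hu1 => [->|//]; rewrite mul0n.
    have hv2 : v <= n by rewrite -(leq_pmul2r t0).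
    have e1 : (n - v) * t = n * t - v * t by rewrite mulnBl.
    have e2 : (n + v) * t = n * t + v * t by rewrite mulnDl.
    rewrite (_ : n * t - v * t = 0 + (n - v) * t); last lia.
    rewrite (_ : n * t + v * t = 0 + (n + v) * t); last lia.
    rewrite !R // c0; lia.
  have hv : v < n by rewrite -(ltn_pmul2r t0); lia.
  have e1 : (n - v - 1) * t = n * t - v * t - t by rewrite !mulnBl mul1n.
  have e2 : (n + v) * t = n * t + v * t by rewrite mulnDl.
  have e3 : v * t + t <= n * t by rewrite -mulSnr leq_mul2r; lia.
  rewrite (_ : n * t - (v * t + s) = (t - s) + (n - v - 1) * t); last lia.
  rewrite (_ : n * t + (v * t + s) = s + (n + v) * t); last lia.
  rewrite !R; try lia.
  have := cp s ltac:(lia); lia.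
- move=> x hx.
  have [q [r [ed hr]]] : exists q r, x = q * t + r /\ r < t.
    by exists (x %/ t), (x %% t); rewrite -divn_eq ltn_mod t0.
  subst x.
  rewrite addnC R //.
  have e2 : 2 * L - 1 = (2 * n) * t + 1 by rewrite -mulnA; lia.
  rewrite e2 in hx.
  case: (posnP r) => hr0.
    subst r; rewrite c0.
    have : 2 * n < q by rewrite -(ltn_pmul2r t0); lia.
    lia.
  have := cp r ltac:(lia).
  have : 2 * n <= q.
    case: (leqP (2 * n) q) => // hq.
    have : q * t + t <= (2 * n) * t by rewrite -mulSnr leq_mul2r; lia.
    lia.
  lia.
Qed.

Lemma sumn_nth s N : size s <= N -> sumn s = \sum_(0 <= j < N) nth 0 s j.
Proof.
rewrite big_mkord.
elim: s N => [|x s IH] N h; first by rewrite big1 // => i _; rewrite nth_nil.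
case: N h => // N h.
by rewrite big_ord_recl /= (IH N).
Qed.

Lemma sum_zero (F : nat -> nat) a b : (forall j, a <= j < b -> F j = 0) -> \sum_(a <= j < b) F j = 0.
Proof.
move=> H; rewrite big_nat_cond big1 // => j /andP[hj _]; exact: H.
Qed.

Lemma tele (l m : seq nat) a c : a <= c ->
  (forall j, a <= j < c -> (nth 0 m j).+1 = nth 0 l j.+1) ->
  (forall j, nth 0 m j <= nth 0 l j) ->
  \sum_(a <= j < c.+1) (nth 0 l j - nth 0 m j) + nth 0 m c = nth 0 l a + (c - a).
Proof.
move=> hac H hle; elim: c hac H => [|c IH] hac H.
  have -> : a = 0 by lia.
  rewrite big_nat1; have := hle 0; lia.
case: (leqP a c) => hac'.
  rewrite big_nat_recr /=; last lia.
  have := IH hac' (fun j hj => H j ltac:(lia)).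
  have := H c ltac:(lia); have := hle c; have := hle c.+1; lia.
have -> : a = c.+1 by lia.
rewrite big_nat1; have := hle c.+1; lia.
Qed.

Lemma sum_window (F : nat -> nat) a c N : a <= c -> c < N ->
  (forall j, j < a -> F j = 0) -> (forall j, c < j -> F j = 0) ->
  \sum_(0 <= j < N) F j = \sum_(a <= j < c.+1) F j.
Proof.
move=> hac hcN H1 H2.
rewrite (@big_cat_nat _ _ _ a 0 N) //; last lia.
rewrite (sum_zero (a := 0)); last by move=> j hj; apply: H1; lia.
rewrite (@big_cat_nat _ _ _ c.+1 a N) /=; try lia.
by rewrite (sum_zero (a := c.+1) (b := N)) ?addn0 // => j hj; apply: H2; lia.
Qed.

Lemma in_skewE l m i c : in_skew l m (i, c) = (c < nth 0 l i) && ~~ (c < nth 0 m i).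
Proof. by []. Qed.

Lemma crossing l m j : (forall col, in_skew l m (j, col) -> in_skew l m (j.+1, col) -> False) ->
  forall p x, x.1 <= j -> in_skew l m x -> path adjacent x p -> all (in_skew l m) p -> (last x p).1 <= j.
Proof.
move=> NC; elim=> [|y p IH] x hx sx //= /andP[hxy hp] /andP[sy hall].
apply: IH => //.
move: x y hxy hx sx sy {hp hall} => [x1 x2] [y1 y2]; rewrite /adjacent /= => hxy hx sx sy.
case: (leqP y1 j) => // hy.
have [e1 [e2 e3]] : y1 = j.+1 /\ y2 = x2 /\ x1 = j by lia.
subst; exfalso; exact: NC sx sy.
Qed.

Lemma size_contained l m : is_partition m -> contained m l -> size m <= size l.
Proof.
move=> pm cont; case: (leqP (size m) (size l)) => // h.
have := part_pos pm (_ : (size m).-1 < size m); have := cont (size m).-1.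
rewrite (nth_default 0 (_ : size l <= (size m).-1)); lia.
Qed.

Lemma rim_struct t l m : 0 < t -> is_partition l -> remove_rim_hook t l m ->
  exists a c, [/\ a <= c, c < size l, (forall j, j < a \/ c < j -> nth 0 m j = nth 0 l j),
     (forall j, a <= j < c -> (nth 0 m j).+1 = nth 0 l j.+1) &
     nth 0 l a + c = nth 0 m c + a + t].
Proof.
move=> t0 pl [pm cont hsum conn no22].
set N := size l.
have hsm := size_contained pm cont.
have hS : \sum_(0 <= j < N) (nth 0 l j - nth 0 m j) = t.
  move: hsum; rewrite (sumn_nth (N := N)) // (sumn_nth (s := m) (N := N)) //.
  rewrite (eq_bigr (fun j => nth 0 m j + (nth 0 l j - nth 0 m j))); last by move=> j _; have := cont j; lia.
  rewrite big_split /=; lia.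
have ex : exists j, nth 0 m j < nth 0 l j.
  case: (boolP (has (fun j => nth 0 m j < nth 0 l j) (iota 0 N))) => [/hasP[j _ hj]|/hasPn H].
    by exists j.
  exfalso; move: hS; rewrite sum_zero; first lia.
  move=> j hj; have := H j; rewrite mem_iota => /(_ ltac:(lia)); lia.
have ub : forall j, nth 0 m j < nth 0 l j -> j <= N.
  move=> j hj; case: (leqP j N) => // hjN.
  by move: hj; rewrite (nth_default 0 (_ : size l <= j)); lia.
case: (ex_minnP ex) => a Pa amin.
case: (ex_maxnP ex ub) => c Pc cmax.
have hac : a <= c by apply: cmax.
have hcN : c < size l.
  case: (ltnP c (size l)) => // h; move: Pc; rewrite (nth_default 0 h); lia.
have out : forall j, j < a \/ c < j -> nth 0 m j = nth 0 l j.
  move=> j hj; have := cont j; case: (ltnP (nth 0 m j) (nth 0 l j)) => h; last lia.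
  have := amin j h; have := cmax j h; lia.
have n22 : forall j, nth 0 l j.+1 <= (nth 0 m j).+1.
  move=> j; case: (leqP (nth 0 l j.+1) (nth 0 m j).+1) => // h; exfalso.
  apply: (no22 j (nth 0 m j)).
  have h1 := part_mono pl (leqnSn j); have h2 := part_mono pm (leqnSn j).
  rewrite !in_skewE; apply/and4P; split; apply/andP; split; lia.
have cn : forall j, a <= j < c -> nth 0 m j < nth 0 l j.+1.
  move=> j /andP[h1 h2]; case: (ltnP (nth 0 m j) (nth 0 l j.+1)) => // h; exfalso.
  have sa : in_skew l m (a, nth 0 m a) by rewrite in_skewE Pa ltnn.
  have sc : in_skew l m (c, nth 0 m c) by rewrite in_skewE Pc ltnn.
  have [p [hp hl ha]] := conn _ _ sa sc.
  have NC : forall col, in_skew l m (j, col) -> in_skew l m (j.+1, col) -> False.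
    move=> col; rewrite !in_skewE => /andP[_ q1] /andP[q2 _]; lia.
  have := crossing NC (x := (a, nth 0 m a)) h1 sa hp ha; rewrite hl /=; lia.
exists a, c; split => //.
  move=> j hj; have := n22 j; have := cn j hj; lia.
have := tele (l := l) (m := m) hac _ (fun j => cont j).
rewrite -(sum_window (F := fun j => nth 0 l j - nth 0 m j) (N := N) hac hcN); first last.
- by move=> j hj; rewrite out //; [lia | right].
- by move=> j hj; rewrite out //; [lia | left].
rewrite hS => H; have := H (fun j hj => ltac:(have := n22 j; have := cn j hj; lia)).
have := cont c; lia.
Qed.

Lemma nres_rows t l L r : nres t l L r = count (fun j => (nth 0 l j + L - j.+1) %% t == r %% t) (iota 0 L).
Proof.
rewrite /nres (_ : iota 1 L = map (fun j => 1 + j) (iota 0 L)); last by rewrite -iotaDl.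
by rewrite count_map.
Qed.

Lemma count_split4 (g : pred nat) a c L : a <= c -> c < L ->
  count g (iota 0 L) = count g (iota 0 a) + count g (iota a (c - a)) + g c + count g (iota c.+1 (L - c.+1)).
Proof.
move=> hac hcL.
have -> : iota 0 L = iota 0 a ++ iota a (c - a) ++ iota c 1 ++ iota c.+1 (L - c.+1).
  have -> : iota 0 L = iota 0 (a + ((c - a) + (1 + (L - c.+1)))) by congr iota; lia.
  rewrite !iotaD add0n (_ : a + (c - a) = c); last lia.
  by rewrite addn1.
rewrite !count_cat /=; lia.
Qed.

Lemma nres_rim t l m L r : 0 < t -> is_partition l -> size l <= L -> remove_rim_hook t l m ->
  nres t m L r = nres t l L r.
Proof.
move=> t0 pl hs rh.
have [a [c [hac hcN out mid hsum]]] := rim_struct t0 pl rh.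
rewrite !nres_rows.
set P := fun (s : seq nat) j => (nth 0 s j + L - j.+1) %% t == r %% t.
have hcL : c < L by apply: leq_trans hcN hs.
rewrite -/(P m) -/(P l) (count_split4 (P m) hac hcL) (count_split4 (P l) hac hcL).
have e1 : count (P m) (iota 0 a) = count (P l) (iota 0 a).
  apply: eq_in_count => j; rewrite mem_iota => hj; rewrite /P out //; left; lia.
have e2 : count (P m) (iota c.+1 (L - c.+1)) = count (P l) (iota c.+1 (L - c.+1)).
  apply: eq_in_count => j; rewrite mem_iota => hj; rewrite /P out //; right; lia.
have e3 : count (P m) (iota a (c - a)) = count (P l) (iota a.+1 (c - a)).
  rewrite (_ : a.+1 = 1 + a) // iotaDl count_map; apply: eq_in_count => j; rewrite mem_iota => hj.
  rewrite /P /= -(mid j) ?add1n; last lia.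
  have : c < L by apply: leq_trans hcN hs.
  move=> ?; congr (_ %% t == _); lia.
have e4 : P m c = P l a.
  rewrite /P (_ : nth 0 l a + L - a.+1 = (nth 0 m c + L - c.+1) + t); last first.
    have : c < L by apply: leq_trans hcN hs.
    lia.
  by rewrite modnDr.
have e5 : count (P l) (iota a (c - a)) + P l c = P l a + count (P l) (iota a.+1 (c - a)).
  have := erefl (count (P l) (iota a (c - a).+1)).
  rewrite {1}(_ : (c - a).+1 = (c - a) + 1) ?iotaD ?count_cat /=; last lia.
  rewrite (_ : a + (c - a) = c); last lia.
  lia.
rewrite e1 e2 e3 e4; lia.
Qed.

Definition reach l m (x y : nat * nat) :=
  exists p, [/\ path adjacent x p, last x p = y & all (in_skew l m) p].

Lemma reach_refl l m x : reach l m x x.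
Proof. by exists [::]. Qed.

Lemma reach_step l m x y : adjacent x y -> in_skew l m y -> reach l m x y.
Proof. by move=> h1 h2; exists [:: y]; rewrite /= h1 h2. Qed.

Lemma reach_trans l m x y z : reach l m x y -> reach l m y z -> reach l m x z.
Proof.
move=> [p [p1 p2 p3]] [q [q1 q2 q3]]; exists (p ++ q).
by rewrite cat_path last_cat p2 all_cat p1 q1 p3 q3 q2.
Qed.

Lemma adjacent_sym x y : adjacent x y = adjacent y x.
Proof.
rewrite /adjacent; case: x y => [x1 x2] [y1 y2] /=.
rewrite [x1 == y1]eq_sym [x2 == y2]eq_sym [(x2 == _) || _]orbC [(x1 == _) || _]orbC.
by [].
Qed.

Lemma all_belast (T : Type) (a : pred T) x p : a x -> all a p -> all a (belast x p).
Proof. elim: p x => [|y p IH] x //= hx /andP[hy hp]; rewrite hx /=; exact: IH. Qed.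

Lemma reach_sym l m x y : in_skew l m x -> reach l m x y -> reach l m y x.
Proof.
move=> sx [p [p1 p2 p3]]; exists (rev (belast x p)); split.
- rewrite -p2 rev_path; apply: etrans p1; apply: eq_path => u v /=; exact: adjacent_sym.
- rewrite -p2; case: p {p1 p2 p3} => [|z p] //=; by rewrite rev_cons last_rcons.
- by rewrite all_rev; apply: all_belast.
Qed.

Lemma sorted_mkseq (f : nat -> nat) z : (forall q, f q.+1 <= f q) -> sorted geq (mkseq f z).
Proof.
move=> H; case: z => [|z] //; rewrite /mkseq /=.
elim: z 0 => [|z IH] i //=; rewrite H /=; exact: IH.
Qed.

Lemma rim_build t l a c (mf : nat -> nat) : is_partition l -> a <= c ->
  (forall j, j < a \/ c < j -> mf j = nth 0 l j) ->
  (forall j, a <= j < c -> (mf j).+1 = nth 0 l j.+1) ->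
  nth 0 l c.+1 <= mf c -> mf c < nth 0 l c ->
  nth 0 l a + c = mf c + a + t ->
  exists m, remove_rim_hook t l m.
Proof.
move=> pl hac out mid hc1 hc2 hsum.
have lmono : forall i j, i <= j -> nth 0 l j <= nth 0 l i by move=> i j; apply: part_mono.
have mle : forall j, mf j <= nth 0 l j.
  move=> j; case: (ltnP j a) => h1; first by rewrite out; [lia | left].
  case: (ltnP c j) => h2; first by rewrite out; [lia | right].
  case: (ltnP j c) => h3; last by rewrite (_ : j = c); lia.
  have := mid j ltac:(lia); have := lmono j j.+1 (leqnSn j); lia.
have n22 : forall j, nth 0 l j.+1 <= (mf j).+1.
  move=> j; case: (ltnP j a) => h1; first by rewrite out; [have := lmono j j.+1 (leqnSn j); lia | left].
  case: (ltnP c j) => h2; first by rewrite out; [have := lmono j j.+1 (leqnSn j); lia | right].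
  case: (ltnP j c) => h3; last by rewrite (_ : j = c); lia.
  have := mid j ltac:(lia); lia.
have manti : forall j, mf j.+1 <= mf j.
  move=> j; case: (ltnP j a) => h1.
    rewrite (out j); last by left.
    have := mle j.+1; have := lmono j j.+1 (leqnSn j); lia.
  case: (ltnP c j) => h2.
    rewrite (out j) ?(out j.+1); [ | right; lia | right; lia].
    exact: lmono.
  case: (ltnP j c) => h3; last by rewrite (_ : j = c) ?(out c.+1); [lia | right | lia].
  have := mid j ltac:(lia).
  case: (ltnP j.+1 c) => h4.
    have := mid j.+1 ltac:(lia); have := lmono j.+1 j.+2 (leqnSn _); lia.
  have -> : j.+1 = c by lia.
  lia.
set N := size l + c.+1.
have mN : mf N = 0 by rewrite out; [rewrite nth_default //; lia | right; lia].
have ex : exists z, mf z == 0 by exists N; rewrite mN.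
case: (ex_minnP ex) => z /eqP fz zmin.
have zN : z <= N by apply: zmin; rewrite mN.
set m := mkseq mf z.
have nm : forall j, nth 0 m j = mf j.
  move=> j; case: (ltnP j z) => h; first by rewrite nth_mkseq.
  rewrite nth_default ?size_mkseq //.
  by have := antitone manti h; rewrite fz; lia.
have skewE : forall i col, in_skew l m (i, col) = (col < nth 0 l i) && ~~ (col < mf i).
  by move=> i col; rewrite in_skewE nm.
exists m; split.
- rewrite /is_partition sorted_mkseq //=; apply/allP => x; rewrite /m /mkseq => /mapP[j].
  rewrite mem_iota => hj ->; case: (posnP (mf j)) => // h0; have := zmin j; rewrite h0 => /(_ isT); lia.
- by move=> j; rewrite nm.
- have hzm : size m <= N by rewrite size_mkseq.
  rewrite (sumn_nth (s := l) (N := N)) ?(sumn_nth (s := m) (N := N)) //; last lia.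
  rewrite (eq_bigr (fun j => nth 0 m j + (nth 0 l j - nth 0 m j))); last by move=> j _; rewrite nm; have := mle j; lia.
  rewrite big_split /=; congr (_ + _).
  have hcN : c < N by rewrite /N; lia.
  rewrite (sum_window (a := a) (c := c)) //; first last.
  + by move=> j hj; rewrite nm out //; [lia | right].
  + by move=> j hj; rewrite nm out //; [lia | left].
  have := tele (l := l) (m := m) hac (fun j hj => ltac:(rewrite nm; exact: mid)) (fun j => ltac:(rewrite nm; exact: mle)).
  rewrite nm; lia.
- have sT : in_skew l m (c, mf c) by rewrite skewE hc2 ltnn.
  have row : forall r col, mf r <= col < nth 0 l r -> reach l m (r, col) (r, mf r).
    move=> r; elim=> [|col IH] h.
      by rewrite (_ : mf r = 0); [apply: reach_refl | lia].
    case: (ltnP (mf r) col.+1) => h1; last by rewrite (_ : mf r = col.+1); [apply: reach_refl | lia].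
    apply: (reach_trans (y := (r, col))); last by apply: IH; lia.
    apply: reach_step; first by rewrite /adjacent /= !eqxx.
    by rewrite skewE; apply/andP; split; lia.
  have inrow : forall r col, in_skew l m (r, col) -> a <= r <= c.
    move=> r col; rewrite skewE => /andP[h1 h2].
    case: (ltnP r a) => q1; first by move: h2; rewrite out; [lia | left].
    case: (ltnP c r) => q2; first by move: h2; rewrite out; [lia | right].
    lia.
  have down : forall k r col, r + k = c -> in_skew l m (r, col) -> reach l m (r, col) (c, mf c).
    elim=> [|k IH] r col hrk sk.
      rewrite addn0 in hrk; subst r; apply: row; move: sk; rewrite skewE => /andP[]; lia.
    have [ha hc] := andP (inrow _ _ sk).
    apply: (reach_trans (y := (r, mf r))).
      apply: row; move: sk; rewrite skewE => /andP[]; lia.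
    have hm := mid r ltac:(lia).
    apply: (reach_trans (y := (r.+1, mf r))).
      apply: reach_step; first by rewrite /adjacent /= !eqxx !orbT.
      rewrite skewE; apply/andP; split; first lia.
      by have := manti r; lia.
    apply: IH; first lia.
    rewrite skewE; apply/andP; split; first lia.
    by have := manti r; lia.
  have toT : forall x, in_skew l m x -> reach l m x (c, mf c).
    move=> [r col] sk; have [_ hc] := andP (inrow _ _ sk).
    apply: (down (c - r)) => //; lia.
  move=> x y sx sy.
  exact: (reach_trans (toT x sx) (reach_sym sy (toT y sy))).
- move=> i j /and4P[]; rewrite !skewE; have := n22 i; lia.
Qed.


Lemma core_closed t k L : 0 < t -> is_partition k -> size k <= L ->
  (forall m, ~ remove_rim_hook t k m) -> tclosed t k L.
Proof.
move=> t0 pk hs core x hx hxt.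
case: (posnP (bc k L (x - t))) => // hy; exfalso.
set y := x - t.
set B := fun i => nth 0 k i + L - i.+1.
have hB : forall i, beta k L i.+1 = B i by [].
have noy : forall i, i < L -> B i != y.
  move=> i hi; move: hy; rewrite /bc => /eqP; rewrite -leqn0 leqNgt -has_count => /hasPn H.
  have := H i.+1; rewrite mem_iota hB; apply; lia.
move: hx; rewrite /bc -has_count => /hasP[j]; rewrite mem_iota => hj /eqP hbj.
set a := j.-1.
have haL : a < L by rewrite /a; lia.
have hBa : B a = x by rewrite -hB /a prednK //; lia.
set P := fun i => (i < L) && (y < B i).
have exP : exists i, P i by exists a; rewrite /P haL hBa /y; lia.
have ubP : forall i, P i -> i <= L by move=> i /andP[h _]; lia.
case: (ex_maxnP exP ubP) => c /andP[hcL hyc] cmax.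
have hac : a <= c by apply: cmax; rewrite /P haL hBa /y; lia.
have after : c.+1 < L -> B c.+1 < y.
  move=> h; have := noy _ h; case: (ltnP y (B c.+1)) => h2.
    by have := cmax c.+1; rewrite /P h h2 => /(_ isT); lia.
  lia.
have hLy : L <= y + c.+1.
  case: (ltnP c.+1 L) => h; last lia.
  have := after h; rewrite /B; lia.
set mf := fun j => if (j < a) || (c < j) then nth 0 k j
                   else if j == c then y + c.+1 - L else (nth 0 k j.+1).-1.
have mfc : mf c = y + c.+1 - L by rewrite /mf eqxx ltnn orbF ifF //; apply/negbTE; rewrite -leqNgt.
have hc2 : mf c < nth 0 k c by rewrite mfc; move: hyc; rewrite /B; lia.
have hc1 : nth 0 k c.+1 <= mf c.
  rewrite mfc; case: (ltnP c.+1 L) => h.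
    by have := after h; rewrite /B; lia.
  by rewrite nth_default //; lia.
apply: (core (mkseq mf 0)) => //.
have [m rh] : exists m, remove_rim_hook t k m.
  apply: (rim_build (a := a) (c := c) (mf := mf)) => //.
  - move=> i hi; rewrite /mf; case: hi => h; first by rewrite h.
    by rewrite h orbT.
  - move=> i /andP[h1 h2]; rewrite /mf.
    rewrite (_ : (i < a) || (c < i) = false); last by apply/negbTE; lia.
    rewrite (_ : i == c = false); last by apply/negbTE; lia.
    have := part_mono pk (_ : i.+1 <= c); lia.
  - rewrite mfc; move: hBa; rewrite /B /y; lia.
by case: (core m).
Qed.

Lemma exists_core t l : 0 < t -> exists k, is_tcore t l k.
Proof.
move=> t0; have [n] := ubnP (sumn l); elim: n l => // n IH l hl.
case: (classic (exists m, remove_rim_hook t l m)) => [[m rm]|H].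
  have [_ _ hsum _ _] := rm.
  have [k [rk ck]] := IH m ltac:(lia).
  by exists k; split => //; apply: rhr_step rm rk.
exists l; split; first exact: rhr_refl.
by move=> m rm; apply: H; exists m.
Qed.

Lemma reach_inv t l k L : 0 < t -> rim_hook_reach t l k -> is_partition l -> size l <= L ->
  [/\ is_partition k, size k <= L & forall r, nres t k L r = nres t l L r].
Proof.
move=> t0; elim=> [l' | l' m k' rm _ IH] pl hs; first by split.
have [pm cont _ _ _] := rm.
have hsm := size_contained pm cont.
have [pk hk e] := IH pm (leq_trans hsm hs).
split => // r; rewrite e; exact: nres_rim.
Qed.

Theorem lemma3p4 (t n : nat) (l : seq nat) :
  2 <= t -> 1 <= n -> is_partition l -> size l <= t * n + 1 ->
  (exists k, is_tcore t l k) /\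
  (forall k, is_tcore t l k ->
     (asym100 k <->
      (nres t l (t * n + 1) 0 = n + 1 /\
       forall i, 1 <= i <= t - 1 ->
         nres t l (t * n + 1) i + nres t l (t * n + 1) (t - i) = 2 * n))).
Proof.
move=> ht hn pl hs; have t0 : 0 < t by lia.
split; first exact: exists_core.
move=> k [rk ck].
have [pk hk e] := reach_inv t0 rk pl hs.
have cl := core_closed t0 pk hk ck.
rewrite asym_Q // (Q_Q' pk hk) (Q'_S pk (_ : 1 <= t * n + 1)) //; last lia.
rewrite (S_counts pk ht hn cl) !e.
split=> [[h1 h2]|[h1 h2]]; split=> // i hi.
  by rewrite -!e; apply: h2.
by rewrite !e; apply: h2.
Qed.
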